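(* Let $D$ be a reduced knot diagram, let $2\le k\le\infty$, and let $\boldsymbol\ell$ be a null pattern of the game matrix $M$ of some version of the $k$-color region select game on $D$. Let $s=\sigma_{\boldsymbol\ell}(e)$ for some edge $e$ of $D$. Fix a checkerboard shading of $D$, and let $r_1,r_2$ be two regions that are both shaded or both unshaded. Then there is an integer $i$ with $|2i|\le d(r_1,r_2)$ such that $\boldsymbol\ell(r_1)=\boldsymbol\ell(r_2)+2is$ in $\mathbb{Z}_k$.
   Context: Diagrams: a link (knot) diagram $D$ is the underlying graph of a regular projection of a link (knot) into $S^2$. Its vertices are the crossings, each of valence 4, and over/under information is ignored. Components without crossings are closed loops, each regarded as one edge with no vertices. Regions of $D$ are the connected components of $S^2\setminus D$. A vertex or edge is incident to a region if it lies in the boundary of that region. Two regions are adjacent if they are incident to a common edge. A vertex $v$ is reducible if some circle in $S^2$ meets $D$ transversely only at $v$, and irreducible otherwise. An irreducible vertex is incident to four distinct regions. A reducible vertex $v$ is incident to exactly three regions $r_0,r_1,r_2$, where $r_0$ touches $v$ from two sides and $r_1,r_2$ touch it from one side. A knot diagram with $n$ vertices has $n+2$ regions. A knot diagram is reduced if all its vertices are irreducible. Ring: for an integer $k\ge2$ let $\mathbb{Z}_k=\mathbb{Z}/k\mathbb{Z}$, and for $k=\infty$ let $\mathbb{Z}_\infty=\mathbb{Z}$. Game versions: a version of the $k$-color region select game on $D$ is a choice of an increment number $a(v,r)\in\mathbb{Z}_k$ for every incident vertex–region pair, subject to the following rules. - If $k<\infty$ and $v$ is irreducible, then $a(v,r)=a_v$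 is the same for all regions $r$ incident to $v$, and $a_v$ is not a zero divisor of $\mathbb{Z}_k$. - If $k<\infty$ and $v$ is reducible, then $a(v,r_0)$ is arbitrary, while $a(v,r_1)$ and $a(v,r_2)$ are not zero divisors. - If $k=\infty$, then $a(v,r)=1$, except that $a(v,r_0)\in\mathbb{Z}$ is arbitrary when $v$ is reducible. - The original game is the version in which all increment numbers equal $1$. Game matrix: enumerate the vertices as $v_1,\dots,v_n$ and the regions as $r_1,\dots,r_m$. The game matrix is the $n\times m$ matrix $M$ over $\mathbb{Z}_k$ with $M_{ij}=a(v_i,r_j)$ if $v_i$ is incident to $r_j$, and $M_{ij}=0$ otherwise. Patterns and configurations: a push pattern is a vector $\mathbf p\in\mathbb{Z}_k^m$, and $\mathbf p(r_j)=p_j$ is the number of times $r_j$ is pushed. A region $r$ is not pushed in $\mathbf p$ if $\mathbf p(r)=0$. A color configuration is a vector $\mathbf c\in\mathbb{Z}_k^n$. Applying $\mathbf p$ to $\mathbf c$ yields $\mathbf c+M\mathbf p$. The configuration $\mathbf c$ is solvable if some $\mathbf p$ satisfies $M\mathbf p=-\mathbf c$; such a $\mathbf p$ is a solving pattern for $\mathbf c$. $D$ is always solvable in the version if every $\mathbf c\in\mathbb{Z}_k^n$ is solvable. A null pattern is an element of $Ker_k(M)=\{\mathbf p\in\mathbb{Z}_k^m: M\mathbf p=0\}$. Push number: for a push pattern $\mathbf p$ and an edge $e$ incident to regions $r,r'$, the push number of $e$ is $\sigma_{\mathbf p}(e)=\mathbf p(r)+\mathbf p(r')\in\mathbb{Z}_k$.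 Checkerboard shading: a checkerboard shading of $D$ is a shading of some of its regions such that, of any two adjacent regions, exactly one is shaded. Distance: the dual graph of $D$ has one vertex per region, with an edge between the vertices of each pair of adjacent regions. The distance $d(r_1,r_2)$ is the graph distance between the corresponding vertices of the dual graph. *)

(* Defs.v *)
From HB Require Import structures.
From mathcomp Require Import all_boot all_order all_algebra.
Set Implicit Arguments. Unset Strict Implicit. Unset Printing Implicit Defensive.
Import Order.TTheory GRing.Theory Num.Theory.

(* A diagram with crossings [vert] is encoded by its darts (half-edges)
   (v, i), i : 'I_4, listed counterclockwise around the crossing v.
   [alpha] glues half-edges into edges (fixed-point-free involution). *)
Record diagram := Diagram {
  vert : finType;
  alpha : vert * 'I_4 -> vert * 'I_4;
  alpha_invol : involutive alpha;
  alpha_fpf : forall d, alpha d != d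
}.

Definition dart (D : diagram) := (vert D * 'I_4)%type.

Local Open Scope ring_scope.
Section Diag.
Variable D : diagram.
Local Notation Dt := (dart D).

Definition sigma (d : Dt) : Dt := (d.1, ordS d.2).
Definition sigma_inv (d : Dt) : Dt := (d.1, ord_pred d.2).

(* dart (v,i) also names the corner (angle) of v between half-edges i and i+1;
   the face permutation maps a corner to the next corner of the same region *)
Definition phi (d : Dt) : Dt := alpha (sigma d).
(* straight-ahead walk along the curve *)
Definition tau (d : Dt) : Dt := sigma (sigma (alpha d)).

Definition orbitset (f : Dt -> Dt) (d : Dt) : {set Dt} := [set x | fconnect f d x].

Definition face (d : Dt) : {set Dt} := orbitset phi d.
Definition regions : {set {set Dt}} := [set face d | d : Dt].

(* the (unoriented) components of the curve; each is traversed by two tau-orbits *)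
Definition strand_orbits : {set {set Dt}} := [set orbitset tau d | d : Dt].

(* knot diagram on S^2: one component, and Euler characteristic
   V - E + F = 2 with E = 2V (the diagram is connected since it is one curve) *)
Definition knot_diagram : Prop :=
  #|strand_orbits| = 2 /\ #|regions| = (#|vert D| + 2)%N.

Definition incident (v : vert D) (r : {set Dt}) : bool := [exists i : 'I_4, (v, i) \in r].

Definition touches (v : vert D) (r : {set Dt}) : nat := #|[set i : 'I_4 | (v, i) \in r]|.

Definition irreducible (v : vert D) : bool := #|[set face (v, i) | i : 'I_4]| == 4%N.
Definition reduced : Prop := forall v, irreducible v.

(* the edge of half-edge d is incident to face d and face (sigma_inv d) *)
Definition adjacent (r r' : {set Dt}) : bool :=
  [exists d : Dt, (d \in r) && (sigma_inv d \in r')].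

Definition checkerboard (shade : {set Dt} -> bool) : Prop :=
  forall r r', r \in regions -> r' \in regions -> adjacent r r' -> shade r != shade r'.

Fixpoint ball (n : nat) (r : {set Dt}) : {set {set Dt}} :=
  match n with
  | 0 => [set r]
  | n'.+1 => ball n' r :|: [set y in regions | [exists x in ball n' r, adjacent x y]]
  end.
Definition dist (r1 r2 : {set Dt}) : nat :=
  find (fun n => r2 \in ball n r1) (iota 0 #|regions|).

Definition nonzerodiv (R : pzRingType) (x : R) : Prop := forall y, x * y = 0 -> y = 0.

(* a version with k < oo, over R = 'Z_k *)
Definition fin_version (R : pzRingType) (a : vert D -> {set Dt} -> R) : Prop :=
  forall v,
    (irreducible v ->
       exists2 av : R, nonzerodiv av & forall r, r \in regions -> incident v r -> a v r = av)
    /\ (~~ irreducible v ->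
       forall r, r \in regions -> incident v r -> (touches v r < 2)%N -> nonzerodiv (a v r)).

(* a version with k = oo, over int *)
Definition inf_version (a : vert D -> {set Dt} -> int) : Prop :=
  forall v r, r \in regions -> incident v r ->
    (irreducible v || (touches v r < 2)%N) -> a v r = 1.

(* null pattern: M l = 0 for the game matrix M of the version a *)
Definition null_pattern (R : pzRingType) (a : vert D -> {set Dt} -> R)
    (l : {set Dt} -> R) : Prop :=
  forall v, \sum_(r in regions | incident v r) a v r * l r = 0.

Definition push_number (R : pzRingType) (l : {set Dt} -> R) (d : Dt) : R :=
  l (face d) + l (face (sigma_inv d)).

End Diag.

(* Main.v *)
Require Import Defs.
From HB Require Import structures.
From mathcomp Require Import all_boot all_order all_algebra.
From mathcomp Require Import zify ring.
Set Implicit Arguments. Unset Strict Implicit. Unset Printing Implicit Defensive.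
Import Order.TTheory GRing.Theory Num.Theory.
Local Open Scope ring_scope.

Lemma sum4 (R : comNzRingType) (g : 'I_4 -> R) (i : 'I_4) :
  g i + g (ord_pred i) + (g (ordS (ordS i)) + g (ord_pred (ordS (ordS i)))) = \sum_j g j.
Proof.
pose h (n : nat) := g (inord n).
have gh : forall j, g j = h (val j) by move=> j; rewrite /h inord_val.
rewrite (eq_bigr (fun j : 'I_4 => h (val j))) //.
rewrite !big_ord_recl big_ord0 !gh /=.
case: i => [[|[|[|[|//]]]] Hi] /=; rewrite ?modnDr ?modnn ?modn_small //= addr0; ring.
Qed.

Section S.
Variable D : diagram.
Local Notation Dt := (dart D).

Lemma ord4_SS_pp (i : 'I_4) : ordS (ordS i) = ord_pred (ord_pred i).
Proof. by apply/val_inj; case: i => [[|[|[|[|//]]]] Hi]. Qed.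

Lemma ord4_SS_neq (i : 'I_4) : ordS (ordS i) != i.
Proof. by case: i => [[|[|[|[|//]]]] Hi]. Qed.

Lemma sigmaK : cancel (@sigma D) (@sigma_inv D).
Proof. by case=> v i; rewrite /sigma /sigma_inv /= ordSK. Qed.
Lemma sigma_invK : cancel (@sigma_inv D) (@sigma D).
Proof. by case=> v i; rewrite /sigma /sigma_inv /= ord_predK. Qed.

Lemma alpha_inj : injective (@alpha D).
Proof. exact: inv_inj (@alpha_invol D). Qed.

Lemma phi_inj : injective (@phi D).
Proof. by move=> x y /alpha_inj /(can_inj sigmaK). Qed.

Lemma tau_inj : injective (@tau D).
Proof. by move=> x y /(can_inj sigmaK) /(can_inj sigmaK) /alpha_inj. Qed.

Lemma face_in (d : Dt) : d \in face d.
Proof. by rewrite inE connect0. Qed.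

Lemma face_regions (d : Dt) : face d \in regions D.
Proof. by apply/imsetP; exists d. Qed.

Lemma face_eq r (d : Dt) : r \in regions D -> d \in r -> r = face d.
Proof.
case/imsetP=> x _ ->; rewrite inE => Hxd.
apply/setP=> y; rewrite !inE; apply/idP/idP => H.
- by apply: connect_trans H; rewrite fconnect_sym //; exact: phi_inj.
- exact: connect_trans Hxd H.
Qed.

Lemma face_phi (d : Dt) : face (phi d) = face d.
Proof. apply/esym/face_eq; first exact: face_regions. by rewrite inE fconnect1. Qed.

Lemma alpha_phi (d : Dt) : phi (sigma_inv d) = alpha d.
Proof. by rewrite /phi sigma_invK. Qed.

Lemma ord4_S4 (i : 'I_4) : ordS (ordS (ordS (ordS i))) = i.
Proof. by apply/val_inj; case: i => [[|[|[|[|//]]]] Hi]. Qed.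

Lemma sigma4 z : sigma (sigma (sigma (sigma z))) = z :> Dt.
Proof. by case: z => v i; rewrite /sigma /= ord4_S4. Qed.

Lemma iter_tau_alpha j (x : Dt) : iter j (@tau D) (alpha (iter j (@tau D) x)) = alpha x.
Proof.
elim: j x => // j IH x.
rewrite iterSr iterS -(IH x); congr (iter j _ _).
by rewrite {1}/tau alpha_invol sigma4.
Qed.

Lemma iter_tau_inj m : injective (iter m (@tau D)).
Proof. by elim: m => // m IH x y; rewrite !iterS => /tau_inj /IH. Qed.

Lemma alpha_not_orbit (x : Dt) : ~~ fconnect (@tau D) x (alpha x).
Proof.
apply/negP => /iter_findex; set n := findex _ _ _ => Hn.
move: Hn; rewrite -(odd_double_half n); set m := n./2.
set y := iter m (@tau D) x.
have H1 := iter_tau_alpha m x.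
case: (odd n) => /=; rewrite -addnn.
- rewrite add0n iterD -/y -iterS iterSr -H1 => /iter_tau_inj Hy.
  move: Hy; rewrite /tau; case: (alpha y) => v i /= [] /eqP.
  by rewrite (negbTE (ord4_SS_neq i)).
- rewrite add0n iterD -/y -H1 => /iter_tau_inj Hy.
  by move: (alpha_fpf y); rewrite -{1}Hy eqxx.
Qed.

Lemma orbit_in (x : Dt) : x \in orbitset (@tau D) x.
Proof. by rewrite inE connect0. Qed.

Lemma orbit_eq (x y : Dt) : y \in orbitset (@tau D) x -> orbitset (@tau D) x = orbitset (@tau D) y.
Proof.
rewrite inE => Hxy; apply/setP=> z; rewrite !inE; apply/idP/idP => H.
- by apply: connect_trans H; rewrite fconnect_sym //; exact: tau_inj.
- exact: connect_trans Hxy H.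
Qed.

Lemma two_orbits (HK : knot_diagram D) (x y : Dt) :
  y \in orbitset (@tau D) x \/ y \in orbitset (@tau D) (alpha x).
Proof.
case: HK => /eqP/cards2P [A [B [AB HS]]] _.
have Hne : orbitset (@tau D) x != orbitset (@tau D) (alpha x).
  apply/negP => /eqP Heq; move: (orbit_in (alpha x)).
  by rewrite -Heq inE (negbTE (alpha_not_orbit x)).
have mem z : orbitset (@tau D) z \in [set A; B] by rewrite -HS; apply/imsetP; exists z.
suff : orbitset (@tau D) y = orbitset (@tau D) x \/ orbitset (@tau D) y = orbitset (@tau D) (alpha x).
  by case=> <-; [left|right]; exact: orbit_in.
have := mem x; have := mem (alpha x); have := mem y; rewrite !inE.
move=> /orP [] /eqP Hy /orP [] /eqP Ha /orP [] /eqP Hx.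
all: try (by move: Hne; rewrite Hx Ha eqxx).
all: try (by left; rewrite Hy Hx).
all: try (by right; rewrite Hy Ha).
Qed.


Lemma ball_S n (r : {set Dt}) : ball n.+1 r = ball n r :|: [set y in regions D | [exists x in ball n r, adjacent x y]].
Proof. by []. Qed.

Lemma ball_add n k (r : {set Dt}) : ball n r \subset ball (n + k) r.
Proof.
elim: k => [|k IH]; first by rewrite addn0.
by apply: subset_trans IH _; rewrite addnS ball_S subsetUl.
Qed.

Lemma ball_mono n m (r : {set Dt}) : (n <= m)%N -> ball n r \subset ball m r.
Proof. by move=> H; rewrite -(subnKC H); exact: ball_add. Qed.

Lemma ball_regions n (r : {set Dt}) : r \in regions D -> ball n r \subset regions D.
Proof.
move=> Hr; elim: n => [|n IH]; first by rewrite sub1set.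
rewrite ball_S subUset IH /=; apply/subsetP=> y; rewrite inE => /andP [].
by [].
Qed.

Lemma ball_fix n (r : {set Dt}) : ball n.+1 r = ball n r -> forall k, ball (n + k) r = ball n r.
Proof.
move=> H; elim=> [|k IH]; first by rewrite addn0.
by rewrite addnS ball_S IH -ball_S H.
Qed.

Lemma ball_card n (r : {set Dt}) : (forall n', (n' < n)%N -> ball n'.+1 r != ball n' r) -> (n < #|ball n r|)%N.
Proof.
elim: n => [|n IH] H; first by rewrite /= cards1.
apply: leq_ltn_trans (IH (fun n' Hn' => H n' (ltnW Hn'))) _.
apply: proper_card; rewrite properEneq ball_S subsetUl andbT -ball_S.
by rewrite eq_sym H.
Qed.

Lemma ball_stable (r1 : {set Dt}) m x : r1 \in regions D -> x \in ball m r1 -> x \in ball (#|regions D|.-1) r1.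
Proof.
move=> Hr1 Hx; set N := #|regions D|.
case: (leqP m N.-1) => Hm; first exact: (subsetP (ball_mono r1 Hm)).
have [n' [Hn' Heq]] : exists n', (n' < N)%N /\ ball n'.+1 r1 = ball n' r1.
  case: (pickP (fun n' : 'I_N => ball n'.+1 r1 == ball n' r1)) => [n' /eqP E|Hno].
    by exists n'.
  have := ball_card (n := N) (r := r1).
  have Hle : (#|ball N r1| <= N)%N by apply: subset_leq_card; exact: ball_regions.
  suff Hall : forall n', (n' < N)%N -> ball n'.+1 r1 != ball n' r1.
    by move=> /(_ Hall) Hlt; move: (leq_trans Hlt Hle); rewrite ltnn.
  by move=> n' Hn'; apply/negbT; exact: (Hno (Ordinal Hn')).
have E1 := ball_fix Heq (m - n').
have E2 := ball_fix Heq (N.-1 - n').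
rewrite subnKC in E1; last by apply: leq_trans (ltnW Hm); rewrite -ltnS prednK //; lia.
rewrite subnKC in E2; last by lia.
by rewrite E2 -E1.
Qed.

Lemma ss_pp (z : Dt) : sigma (sigma z) = sigma_inv (sigma_inv z).
Proof. by case: z => v i; rewrite /sigma /sigma_inv /= ord4_SS_pp. Qed.

Lemma all_reach (HK : knot_diagram D) (r1 r : {set Dt}) : r1 \in regions D -> r \in regions D ->
  exists m, r \in ball m r1.
Proof.
move=> Hr1 /imsetP [d _ ->].
move: Hr1 => /imsetP [x0 _ Hx0].
pose P (z : Dt) := exists m, face z \in ball m r1.
have Psi z : P z -> P (sigma_inv z).
  case=> m Hm; exists m.+1; rewrite ball_S inE; apply/orP; right.
  rewrite inE face_regions /=; apply/existsP; exists (face z); rewrite Hm /=.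
  by apply/existsP; exists z; rewrite !face_in.
have Pal z : P z -> P (alpha z).
  by move=> /Psi [m Hm]; exists m; rewrite -alpha_phi face_phi.
have Ptau z : P z -> P (tau z).
  by move=> /Pal /Psi /Psi; rewrite /tau ss_pp.
have Piter n z : P z -> P (iter n (@tau D) z).
  by move=> Hz; elim: n => // n IH; rewrite iterS; exact: Ptau.
have P0 : P x0 by exists 0%N; rewrite /= inE Hx0.
by case: (two_orbits HK x0 d); rewrite inE => /iter_findex <-; apply: Piter => //; exact: Pal.
Qed.

Lemma dist_ball (HK : knot_diagram D) (r1 r2 : {set Dt}) : r1 \in regions D -> r2 \in regions D ->
  r2 \in ball (dist r1 r2) r1.
Proof.
move=> Hr1 Hr2.
have [m Hm] := all_reach HK Hr1 Hr2.
have Hs := ball_stable Hr1 Hm.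
have HN : (0 < #|regions D|)%N by apply/card_gt0P; exists r1.
have Hhas : has (fun n => r2 \in ball n r1) (iota 0%N #|regions D|).
  apply/hasP; exists (#|regions D|.-1); last exact: Hs.
  by rewrite mem_iota; lia.
have := nth_find 0%N Hhas.
rewrite nth_iota ?add0n //.
by rewrite -[X in (_ < X)%N](size_iota 0%N #|regions D|) -has_find.
Qed.

Lemma sum_incident (R : nzRingType) (l : {set Dt} -> R) (v : vert D) : irreducible v ->
  \sum_(r in regions D | incident v r) l r = \sum_(i < 4) l (face (v, i)).
Proof.
move=> Hirr.
have inj : {in [set: 'I_4] &, injective (fun i => face (v, i))}.
  apply/imset_injP; rewrite cardsT card_ord.
  suff -> : [set face (v, x1) | x1 in [set: 'I_4]] = [set face (v, i) | i : 'I_4] by exact: Hirr.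
  by apply/setP => r; apply/imsetP/imsetP; case=> i _ ->; exists i.
rewrite (eq_bigr (fun r => l r)) //.
transitivity (\sum_(r in (fun i => face (v, i)) @: [set: 'I_4]) l r).
  apply: eq_bigl => r; apply/andP/imsetP.
  - case=> Hr /existsP [i Hi]; exists i => //; exact: face_eq.
  - by case=> i _ ->; split; [exact: face_regions|apply/existsP; exists i; exact: face_in].
rewrite big_imset //; apply: eq_bigl => i; exact: in_setT.
Qed.

Section Ring.
Variable R : comNzRingType.
Variable l : {set Dt} -> R.
Hypothesis Hcorner : forall v, \sum_(i < 4) l (face (v,i)) = 0.

Lemma pn_alpha (d : Dt) : push_number l (alpha d) = push_number l d.
Proof.
have E1 : face (alpha d) = face (sigma_inv d) by rewrite -alpha_phi face_phi.
have E2 : face (sigma_inv (alpha d)) = face d.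
  by rewrite -{2}(alpha_invol d) -(alpha_phi (alpha d)) face_phi.
by rewrite /push_number E1 E2 addrC.
Qed.

Lemma pn_SS (d : Dt) : push_number l (sigma (sigma d)) = - push_number l d.
Proof.
apply/eqP; rewrite -addr_eq0; case: d => v i.
rewrite /push_number /sigma /sigma_inv /=.
rewrite -(Hcorner v) -(sum4 (fun j => l (face (v, j))) i).
by rewrite addrC.
Qed.

Lemma pn_tau (d : Dt) : push_number l (tau d) = - push_number l d.
Proof. by rewrite /tau pn_SS pn_alpha. Qed.

Lemma pn_iter n (d : Dt) : push_number l (iter n (@tau D) d) = push_number l d \/
   push_number l (iter n (@tau D) d) = - push_number l d.
Proof.
elim: n => [|n [] IH]; first by left.
- by right; rewrite iterS pn_tau IH.
- by left; rewrite iterS pn_tau IH opprK.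
Qed.

Lemma pn_pm (HK : knot_diagram D) (e d : Dt) :
  push_number l d = push_number l e \/ push_number l d = - push_number l e.
Proof.
case: (two_orbits HK e d); rewrite inE => /iter_findex <-.
- exact: pn_iter.
- by rewrite -(pn_alpha e); exact: pn_iter.
Qed.

Lemma adj_sum r r' : r \in regions D -> r' \in regions D -> adjacent r r' ->
  exists d : Dt, l r + l r' = push_number l d.
Proof.
move=> Hr Hr' /existsP [d /andP [Hd Hd']].
by exists d; rewrite /push_number -(face_eq Hr Hd) -(face_eq Hr' Hd').
Qed.


Lemma ball_inv (shade : {set Dt} -> bool) (Hcb : checkerboard shade) (r1 : {set Dt})
  (Hr1 : r1 \in regions D) (s : R) (Hpm : forall d : Dt, push_number l d = s \/ push_number l d = - s)
  n r : r \in ball n r1 -> r \in regions D /\ exists m p : nat, [/\ (m <= n)%N, (p <= m)%N,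
     shade r = shade r1 (+) odd m & l r = (-1) ^+ m * l r1 + s *~ (m%:Z - 2 * p%:Z)].
Proof.
elim: n r => [|n IH] r.
  rewrite /= inE => /eqP ->; split => //; exists 0%N, 0%N; split => //=.
  - by rewrite addbF.
  - by rewrite expr0 mul1r mulr0z addr0.
rewrite ball_S inE => /orP [/IH [Hr [m [p [H1 H2 H3 H4]]]]|].
  by split => //; exists m, p; split => //; apply: leqW.
rewrite inE => /andP [Hr /existsP [x /andP [Hx Hadj]]].
have [Hxr [m [p [H1 H2 H3 H4]]]] := IH x Hx.
split => //.
have Hsh : shade r = shade r1 (+) odd m.+1.
  have := Hcb _ _ Hxr Hr Hadj; rewrite H3 /=.
  by case: (shade r); case: (shade r1); case: (odd m).
have [d Hd] := adj_sum Hxr Hr Hadj.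
have Hlr : l r = push_number l d - l x by rewrite -Hd addrC addKr.
case: (Hpm d) => Hpd.
- exists m.+1, (m - p)%N; split => //.
  + by apply: leq_trans (leq_subr _ _) _; apply: leqW.
  + have -> : ((m.+1)%:Z - 2 * (m - p)%N%:Z = 1 - (m%:Z - 2 * p%:Z))%R by lia.
    by rewrite Hlr Hpd H4 exprS mulN1r; ring.
- exists m.+1, (m.+1 - p)%N; split => //.
  + exact: leq_subr.
  + have -> : ((m.+1)%:Z - 2 * (m.+1 - p)%N%:Z = - 1 - (m%:Z - 2 * p%:Z))%R by lia.
    by rewrite Hlr Hpd H4 exprS mulN1r; ring.
Qed.

Lemma core (HK : knot_diagram D) (e : Dt) (shade : {set Dt} -> bool) (Hcb : checkerboard shade)
  (r1 r2 : {set Dt}) : r1 \in regions D -> r2 \in regions D -> shade r1 = shade r2 ->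
  exists i : int, `|2 * i| <= (dist r1 r2)%:Z /\ l r1 = l r2 + push_number l e *~ (2 * i).
Proof.
move=> Hr1 Hr2 Hsh.
set s := push_number l e.
have Hpm : forall d : Dt, push_number l d = s \/ push_number l d = - s by move=> d; exact: pn_pm.
have [_ [m [p [H1 H2 H3 H4]]]] := ball_inv Hcb Hr1 Hpm (dist_ball HK Hr1 Hr2).
have Hodd : odd m = false.
  by move: H3; rewrite Hsh; case: (odd m) => //; case: (shade r2).
have Hm : m = (m./2 + m./2)%N by rewrite addnn -[m in LHS]odd_double_half Hodd.
exists (p%:Z - (m./2)%:Z); split.
  rewrite ler_norml; apply/andP; split; lia.
rewrite H4 -signr_odd Hodd expr0 mul1r.
have -> : (2 * (p%:Z - (m./2)%:Z) = - (m%:Z - 2 * p%:Z))%R by lia.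
rewrite mulrNz; ring.
Qed.
End Ring.
End S.

Theorem mainTheorem12 (D : diagram) (HK : knot_diagram D) (Hred : reduced D) :
  (forall (k : nat), (1 < k)%N ->
    forall (a : vert D -> {set dart D} -> 'Z_k), fin_version a ->
    forall (l : {set dart D} -> 'Z_k), null_pattern a l ->
    forall (e : dart D) (shade : {set dart D} -> bool), checkerboard shade ->
    forall r1 r2, r1 \in regions D -> r2 \in regions D -> shade r1 = shade r2 ->
    exists i : int, `|2 * i| <= (dist r1 r2)%:Z /\
      l r1 = l r2 + push_number l e *~ (2 * i))
  /\
  (forall (a : vert D -> {set dart D} -> int), inf_version a ->
    forall (l : {set dart D} -> int), null_pattern a l ->
    forall (e : dart D) (shade : {set dart D} -> bool), checkerboard shade ->
    forall r1 r2, r1 \in regions D -> r2 \in regions D -> shade r1 = shade r2 ->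
    exists i : int, `|2 * i| <= (dist r1 r2)%:Z /\
      l r1 = l r2 + push_number l e *~ (2 * i)).
Proof.
split.
- move=> k Hk a Ha l Hl e shade Hcb r1 r2 Hr1 Hr2 Hsh.
  have Hc : forall v, \sum_(i < 4) l (face (v, i)) = 0.
    move=> v; have [av Hav Heq] := (Ha v).1 (Hred v).
    rewrite -(sum_incident l (Hred v)); apply: Hav.
    rewrite big_distrr /= -[RHS](Hl v); apply: eq_bigr => r /andP [Hr Hi].
    by rewrite Heq.
  exact: (core Hc HK e Hcb Hr1 Hr2 Hsh).
- move=> a Ha l Hl e shade Hcb r1 r2 Hr1 Hr2 Hsh.
  have Hc : forall v, \sum_(i < 4) l (face (v, i)) = 0.
    move=> v; rewrite -(sum_incident l (Hred v)) -[RHS](Hl v); apply: eq_bigr => r /andP [Hr Hi].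
    by rewrite (Ha v r Hr Hi) ?Hred // mul1r.
  exact: (core Hc HK e Hcb Hr1 Hr2 Hsh).
Qed.
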